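(* For every nonzero $x\in J$ there exists $A\subset\mathbb N$ such that $\|x\|_A=\|x\|_J$. Hence there exists an $x$-norming partition.
   Context: For a real sequence $x=(x(n))_{n\in\mathbb N}$ let $\|x\|_J=\sup\bigl(\sum_{i=1}^n|\sum_{k\in I_i}x(k)|^2\bigr)^{1/2}$ over all $n$ and all families of pairwise disjoint intervals $I_1,\dots,I_n$ of $\mathbb N$ (intervals: nonempty sets of consecutive positive integers, possibly infinite). $J=\{x:\|x\|_J<\infty\}$; for $x\in J$ and any interval $I$ the series $\sum_{k\in I}x(k)$ converges. $\mathrm{supp}(x)=\{n:x(n)\ne0\}$. For $A\subset\mathbb N$, with $m_0=0$, $\mathcal P_A$ is the partition of $\mathbb N$: $\{\mathbb N\}$ if $A=\emptyset$; $\{(m_{i-1},m_i]\}_{i=1}^k\cup\{(m_k,\infty)\}$ if $A=\{m_1<\dots<m_k\}$; $\{(m_{i-1},m_i]\}_{i\in\mathbb N}$ if $A=\{m_1<m_2<\cdots\}$; and $\|x\|_A=(\sum_{I\in\mathcal P_A}|\sum_{k\in I}x(k)|^2)^{1/2}$. A family of intervals $\mathcal I=\{I_i\}_{i\in F}$: $F=\{1,\dots,k\}$ or $F=\mathbb N$, each $I_i$ an interval, $\max I_i<\min I_{i+1}$ whenever $i+1\in F$; $\|x\|_{\mathcal I}=(\sum_{i\in F}|\sum_{k\in I_i}x(k)|^2)^{1/2}$; it is $x$-norming if $\|x\|_{\mathcal I}=\|x\|_J$. For nonempty $L\subset\mathbb N$, $\sup L=\max L$ if finite and $\infty$ otherwise.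 An $x$-norming partition is an $x$-norming family with $\{\min I_i,\max I_i\}\subset\mathrm{supp}(x)$ for all $i<\sup F$, and, if $F$ is finite, $\min I_i\in\mathrm{supp}(x)$ and $\sup I_i=\sup\mathrm{supp}(x)$ for $i=\sup F$. *)

(* Defs.v *)
From Stdlib Require Import Reals Lra Lia List Classical ClassicalEpsilon ClassicalDescription.
From Coquelicot Require Import Coquelicot.
Import ListNotations.
Open Scope R_scope.

(* Indexing convention: the paper's N = {1,2,3,...} is represented by Rocq's
   nat = {0,1,2,...} via n |-> n-1.  A real sequence is x : nat -> R. *)

(* An interval of N: (a, Some b) = {a,...,b} (a <= b), (a, None) = {a, a+1, ...}. *)
Definition interval : Type := (nat * option nat)%type.

Definition interval_wf (I : interval) : Prop :=
  match snd I with Some b => (fst I <= b)%nat | None => True end.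

Definition in_interval (I : interval) (k : nat) : Prop :=
  (fst I <= k)%nat /\ match snd I with Some b => (k <= b)%nat | None => True end.

Definition isum (x : nat -> R) (I : interval) : R :=
  match snd I with
  | Some b => sum_n_m x (fst I) b
  | None => Series (fun n => x (fst I + n)%nat)
  end.

Definition disjoint_intervals (I1 I2 : interval) : Prop :=
  ~ (exists k, in_interval I1 k /\ in_interval I2 k).

Definition default_interval : interval := (0%nat, None).

Definition pairwise_disjoint (l : list interval) : Prop :=
  forall i j, (i < j)%nat -> (j < length l)%nat ->
    disjoint_intervals (nth i l default_interval) (nth j l default_interval).

Definition sqsum (x : nat -> R) (l : list interval) : R :=
  fold_right (fun I acc => (isum x I) ^ 2 + acc) 0 l.

Definition normJ (x : nat -> R) : Rbar :=
  Lub_Rbar (fun r => exists l : list interval,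
     l <> [] /\ List.Forall interval_wf l /\ pairwise_disjoint l /\ r = sqrt (sqsum x l)).

Definition inJ (x : nat -> R) : Prop := Rbar_lt (normJ x) p_infty.

Fixpoint prevA (A : nat -> bool) (m : nat) : option nat :=
  match m with
  | O => None
  | S m' => if A m' then Some m' else prevA A m'
  end.

(* first element of the block of P_A ending at m (for m in A), resp. of the tail
   block after all elements of A below m *)
Definition block_start (A : nat -> bool) (m : nat) : nat :=
  match prevA A m with None => 0%nat | Some p => S p end.

Definition blockA (x : nat -> R) (A : nat -> bool) (m : nat) : R :=
  sum_n_m x (block_start A m) m.

Definition finite_set (A : nat -> bool) : Prop :=
  exists t, forall n, (t <= n)%nat -> A n = false.

(* contribution of the unbounded block (m_k, infinity) when A is finite
   (the whole of N when A is empty); 0 when A is infinite *)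
Definition tail_term (x : nat -> R) (A : nat -> bool) : R :=
  match excluded_middle_informative (finite_set A) with
  | left H =>
      let t := proj1_sig (constructive_indefinite_description _ H) in
      (Series (fun n => x (block_start A t + n)%nat)) ^ 2
  | right _ => 0
  end.

Definition normA (x : nat -> R) (A : nat -> bool) : R :=
  sqrt (Series (fun m => if A m then (blockA x A m) ^ 2 else 0) + tail_term x A).

(* F = {1,...,k} (a nonempty list) or F = N (a sequence) *)
Inductive ifamily : Type :=
| FinF : list interval -> ifamily
| InfF : (nat -> interval) -> ifamily.

Definition ordered_pair (I J : interval) : Prop :=
  match snd I with Some b => (b < fst J)%nat | None => False end.

Definition family_ok (F : ifamily) : Prop :=
  match F with
  | FinF l => l <> [] /\ List.Forall interval_wf l /\
      (forall i, (S i < length l)%nat ->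
         ordered_pair (nth i l default_interval) (nth (S i) l default_interval))
  | InfF f => (forall i, interval_wf (f i)) /\ (forall i, ordered_pair (f i) (f (S i)))
  end.

Definition family_norm (x : nat -> R) (F : ifamily) : R :=
  match F with
  | FinF l => sqrt (sqsum x l)
  | InfF f => sqrt (Series (fun i => (isum x (f i)) ^ 2))
  end.

Definition x_norming (x : nat -> R) (F : ifamily) : Prop :=
  family_ok F /\ Finite (family_norm x F) = normJ x.

Definition inner_cond (x : nat -> R) (I : interval) : Prop :=
  x (fst I) <> 0 /\ match snd I with Some b => x b <> 0 | None => False end.

(* min I in supp(x) and sup I = sup supp(x) *)
Definition last_cond (x : nat -> R) (I : interval) : Prop :=
  x (fst I) <> 0 /\
  match snd I with
  | None => forall N, exists n, (N <= n)%nat /\ x n <> 0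
  | Some m => x m <> 0 /\ forall n, x n <> 0 -> (n <= m)%nat
  end.

Definition x_norming_partition (x : nat -> R) (F : ifamily) : Prop :=
  x_norming x F /\
  match F with
  | FinF l => (forall i, (S i < length l)%nat -> inner_cond x (nth i l default_interval))
              /\ last_cond x (nth (length l - 1) l default_interval)
  | InfF f => forall i, inner_cond x (f i)
  end.

(* Main.v *)
Require Import Defs.
From Stdlib Require Import Reals Lra Lia List Classical ClassicalEpsilon ClassicalDescription.
From Coquelicot Require Import Coquelicot.
Import ListNotations.
Open Scope R_scope.

Fixpoint PS (x : nat -> R) (n : nat) : R :=
  match n with O => 0 | S m => PS x m + x m end.

Lemma PS_sum_n x n : sum_n x n = PS x (S n).
Proof.
  induction n; simpl.
  - rewrite sum_O. lra.
  - rewrite sum_Sn, IHn. simpl. unfold plus; simpl. lra.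
Qed.

Lemma sum_n_m_PS x a b : (a <= b)%nat -> sum_n_m x a b = PS x (S b) - PS x a.
Proof.
  induction b; intros H.
  - assert (a = 0%nat) by lia; subst. rewrite sum_n_n. simpl. lra.
  - destruct (Nat.eq_dec a (S b)).
    + subst. rewrite sum_n_n. simpl. lra.
    + rewrite sum_n_Sm by lia. rewrite IHb by lia. unfold plus; simpl. lra.
Qed.

Fixpoint lastc (a : nat) (cs : list nat) : nat :=
  match cs with [] => a | b :: r => lastc b r end.
Fixpoint incr (a : nat) (cs : list nat) : Prop :=
  match cs with [] => True | b :: r => (a < b)%nat /\ incr b r end.
Fixpoint gv (x : nat -> R) (a : nat) (cs : list nat) : R :=
  match cs with [] => 0 | b :: r => (PS x b - PS x a) ^ 2 + gv x b r end.
Fixpoint fv (x : nat -> R) (L : R) (a : nat) (cs : list nat) : R :=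
  match cs with [] => (L - PS x a) ^ 2 | b :: r => (PS x b - PS x a) ^ 2 + fv x L b r end.

Lemma fv_gv x L a cs : fv x L a cs = gv x a cs + (L - PS x (lastc a cs)) ^ 2.
Proof. revert a; induction cs; intros; simpl; [lra|]. rewrite IHcs. lra. Qed.

Lemma gv_app x a c1 c2 : gv x a (c1 ++ c2) = gv x a c1 + gv x (lastc a c1) c2.
Proof. revert a; induction c1; intros; simpl; [lra|]. rewrite IHc1. lra. Qed.

Lemma fv_app x L a c1 c2 : fv x L a (c1 ++ c2) = gv x a c1 + fv x L (lastc a c1) c2.
Proof. revert a; induction c1; intros; simpl; [lra|]. rewrite IHc1. lra. Qed.

Lemma lastc_app a c1 c2 : lastc a (c1 ++ c2) = lastc (lastc a c1) c2.
Proof. revert a; induction c1; intros; simpl; auto. Qed.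

Lemma incr_app a c1 c2 : incr a (c1 ++ c2) <-> incr a c1 /\ incr (lastc a c1) c2.
Proof. revert a; induction c1; intros; simpl; [tauto|]. rewrite IHc1. tauto. Qed.

Lemma incr_le_last a cs : incr a cs -> (a <= lastc a cs)%nat.
Proof. revert a; induction cs; intros a' H; simpl in *; [lia|]. destruct H. specialize (IHcs a H0). lia. Qed.

Lemma incr_In a cs p : incr a cs -> In p cs -> (a < p /\ p <= lastc a cs)%nat.
Proof.
  revert a; induction cs; intros a' H Hin; simpl in *; [tauto|]. destruct H as [H1 H2].
  destruct Hin as [<-|Hin].
  - split; auto. apply incr_le_last; auto.
  - specialize (IHcs _ H2 Hin). lia.
Qed.

Lemma gv_ge0 x a cs : 0 <= gv x a cs.
Proof. revert a; induction cs; intros; simpl; [lra|]. specialize (IHcs a). pose proof (pow2_ge_0 (PS x a - PS x a0)). lra. Qed.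

Lemma fv_ge0 x L a cs : 0 <= fv x L a cs.
Proof. rewrite fv_gv. pose proof (gv_ge0 x a cs). pose proof (pow2_ge_0 (L - PS x (lastc a cs))). lra. Qed.
Lemma sqsum_ge0 x l : 0 <= sqsum x l.
Proof. induction l; simpl; [lra|]. pose proof (pow2_ge_0 (isum x a)). lra. Qed.

Lemma sqsum_app x l1 l2 : sqsum x (l1 ++ l2) = sqsum x l1 + sqsum x l2.
Proof. induction l1; simpl; [lra|]. rewrite IHl1. lra. Qed.

Lemma pd_single I : pairwise_disjoint [I].
Proof. intros i j Hij Hj. simpl in Hj. lia. Qed.

Lemma pd_cons I l : pairwise_disjoint l -> (forall J, In J l -> disjoint_intervals I J) ->
  pairwise_disjoint (I :: l).
Proof.
  intros Hl HI i j Hij Hj. simpl in Hj.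
  destruct j as [|j]; [lia|]. destruct i as [|i].
  - simpl. apply HI. apply nth_In. lia.
  - simpl. apply Hl; lia.
Qed.

Lemma NJ_props x : inJ x -> exists NJ, normJ x = Finite NJ /\ 0 <= NJ /\
  (forall l, l <> [] -> List.Forall interval_wf l -> pairwise_disjoint l -> sqsum x l <= NJ ^ 2) /\
  (forall eps, 0 < eps -> exists l, l <> [] /\ List.Forall interval_wf l /\ pairwise_disjoint l /\
       NJ ^ 2 - eps <= sqsum x l).
Proof.
  intros HJ. unfold inJ, normJ in *.
  set (E := fun r => exists l : list interval,
     l <> [] /\ List.Forall interval_wf l /\ pairwise_disjoint l /\ r = sqrt (sqsum x l)) in *.
  pose proof (Lub_Rbar_correct E) as [Hub Hleast].
  assert (E0 : E (sqrt (sqsum x [(0%nat, None)]))).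
  { exists [(0%nat, None)]. split; [congruence|]. split.
    - constructor; [exact I|constructor].
    - split; [apply pd_single|reflexivity]. }
  pose proof (Hub _ E0) as H0. pose proof (sqrt_pos (sqsum x [(0%nat, None)])) as Hs0.
  revert H0 Hs0. generalize (sqrt (sqsum x [(0%nat, None)])). intros r0 H0 Hs0.
  destruct (Lub_Rbar E) as [NJ| |] eqn:HN; simpl in HJ, H0; try contradiction.
  assert (Hb : forall l, l <> [] -> List.Forall interval_wf l -> pairwise_disjoint l -> sqsum x l <= NJ ^ 2).
  { intros l H1 H2 H3. assert (HE : E (sqrt (sqsum x l))) by (exists l; auto).
    specialize (Hub _ HE). simpl in Hub. pose proof (sqrt_pos (sqsum x l)).
    pose proof (sqrt_sqrt (sqsum x l) (sqsum_ge0 x l)).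
    assert (0 <= (NJ - sqrt (sqsum x l)) * (NJ + sqrt (sqsum x l))) by (apply Rmult_le_pos; lra). nra. }
  exists NJ. split; [reflexivity|]. split; [lra|]. split; [exact Hb|].
  intros eps Heps.
  destruct (classic (exists l, l <> [] /\ List.Forall interval_wf l /\ pairwise_disjoint l /\
       NJ ^ 2 - eps <= sqsum x l)) as [Hex|Hno]; [exact Hex|exfalso].
  assert (Hall : forall l, l <> [] -> List.Forall interval_wf l -> pairwise_disjoint l -> sqsum x l < NJ ^ 2 - eps).
  { intros l H1 H2 H3. apply Rnot_le_lt. intro Hc. apply Hno. exists l. auto. }
  assert (Hpos : 0 < NJ ^ 2 - eps).
  { pose proof (sqsum_ge0 x [(0%nat, None)]). assert (sqsum x [(0%nat, None)] < NJ ^ 2 - eps).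
    { apply Hall; [congruence| constructor; [exact I|constructor] | apply pd_single]. } lra. }
  assert (Hu : is_ub_Rbar E (sqrt (NJ ^ 2 - eps))).
  { intros r [l [H1 [H2 [H3 ->]]]]. simpl. apply sqrt_le_1_alt.
    left. apply Hall; auto. }
  specialize (Hleast _ Hu). simpl in Hleast. replace (NJ * (NJ * 1)) with (NJ ^ 2) in Hleast by ring.
  pose proof (sqrt_sqrt (NJ ^ 2 - eps) (Rlt_le _ _ Hpos)). pose proof (sqrt_pos (NJ ^ 2 - eps)).
  assert (0 <= (sqrt (NJ ^ 2 - eps) - NJ) * (sqrt (NJ ^ 2 - eps) + NJ)) by (apply Rmult_le_pos; lra). nra.
Qed.

Fixpoint famg (a : nat) (cs : list nat) : list interval :=
  match cs with [] => [] | b :: r => (a, Some (pred b)) :: famg b r end.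
Fixpoint famf (a : nat) (cs : list nat) : list interval :=
  match cs with [] => [(a, None)] | b :: r => (a, Some (pred b)) :: famf b r end.

Lemma isum_fin x a b : (a < b)%nat -> isum x (a, Some (pred b)) = PS x b - PS x a.
Proof. intros H. unfold isum; simpl. rewrite sum_n_m_PS by lia. replace (S (pred b)) with b by lia. reflexivity. Qed.

Lemma PS_shift x a m : PS (fun n => x (a + n)%nat) m = PS x (a + m) - PS x a.
Proof.
  induction m; simpl.
  - rewrite Nat.add_0_r. lra.
  - rewrite IHm, Nat.add_succ_r. simpl. lra.
Qed.

Lemma Series_shift x (L : R) a : is_lim_seq (PS x) L -> Series (fun n => x (a + n)%nat) = L - PS x a.
Proof.
  intros HL. unfold Series.
  assert (H : is_lim_seq (sum_n (fun n => x (a + n)%nat)) (L - PS x a)).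
  { apply is_lim_seq_ext with (u := fun n => PS x (n + S a) - PS x a).
    - intros n. rewrite PS_sum_n, PS_shift. do 2 f_equal. lia.
    - apply is_lim_seq_minus'; [|apply is_lim_seq_const].
      apply (proj1 (is_lim_seq_incr_n (PS x) (S a) L)). exact HL. }
  rewrite (is_lim_seq_unique _ _ H). reflexivity.
Qed.

Lemma isum_inf x (L : R) a : is_lim_seq (PS x) L -> isum x (a, None) = L - PS x a.
Proof. intros HL. unfold isum; simpl. apply Series_shift; auto. Qed.

Lemma famg_fst a cs I : In I (famg a cs) -> incr a cs -> (a <= fst I)%nat.
Proof.
  revert a; induction cs; intros a' Hin Hi; simpl in *; [tauto|].
  destruct Hin as [<-|Hin]; simpl; [lia|]. destruct Hi. specialize (IHcs _ Hin H0). lia.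
Qed.

Lemma famf_fst a cs I : In I (famf a cs) -> incr a cs -> (a <= fst I)%nat.
Proof.
  revert a; induction cs; intros a' Hin Hi; simpl in *.
  - destruct Hin as [<-|[]]; simpl; lia.
  - destruct Hin as [<-|Hin]; simpl; [lia|]. destruct Hi. specialize (IHcs _ Hin H0). lia.
Qed.

Lemma disj_before a b J : (b < fst J)%nat -> disjoint_intervals (a, Some b) J.
Proof. intros H [k [[H1 H2] [H3 H4]]]. simpl in *. lia. Qed.

Lemma famg_ok x a cs : incr a cs ->
  List.Forall interval_wf (famg a cs) /\ pairwise_disjoint (famg a cs) /\ sqsum x (famg a cs) = gv x a cs.
Proof.
  revert a; induction cs; intros a' Hi; simpl in *.
  - split; [constructor|]. split; [intros i j ? ?; simpl in *; lia|]. reflexivity.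
  - destruct Hi as [H1 H2]. destruct (IHcs _ H2) as [F1 [F2 F3]].
    split; [constructor; [unfold interval_wf; simpl; lia|exact F1]|]. split.
    + apply pd_cons; auto. intros J HJ. apply disj_before.
      pose proof (famg_fst _ _ _ HJ H2). lia.
    + rewrite F3, isum_fin by lia. reflexivity.
Qed.

Lemma famf_ok x (L : R) a cs : is_lim_seq (PS x) L -> incr a cs ->
  List.Forall interval_wf (famf a cs) /\ pairwise_disjoint (famf a cs) /\ sqsum x (famf a cs) = fv x L a cs.
Proof.
  intros HL. revert a; induction cs; intros a' Hi; simpl in *.
  - split; [constructor; [exact I|constructor]|]. split; [apply pd_single|].
    rewrite (isum_inf x L) by auto. lra.
  - destruct Hi as [H1 H2]. destruct (IHcs _ H2) as [F1 [F2 F3]].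
    split; [constructor; [unfold interval_wf; simpl; lia|exact F1]|]. split.
    + apply pd_cons; auto. intros J HJ. apply disj_before.
      pose proof (famf_fst _ _ _ HJ H2). lia.
    + rewrite F3, isum_fin by lia. reflexivity.
Qed.

Lemma gv_bound x NJ a cs :
  (forall l, l <> [] -> List.Forall interval_wf l -> pairwise_disjoint l -> sqsum x l <= NJ ^ 2) ->
  incr a cs -> gv x a cs <= NJ ^ 2.
Proof.
  intros Hb Hi. destruct cs as [|b r].
  - simpl. apply pow2_ge_0.
  - destruct (famg_ok x a (b :: r) Hi) as [F1 [F2 F3]]. rewrite <- F3. apply Hb; auto.
    simpl; congruence.
Qed.

Lemma fv_bound x (L : R) NJ a cs : is_lim_seq (PS x) L ->
  (forall l, l <> [] -> List.Forall interval_wf l -> pairwise_disjoint l -> sqsum x l <= NJ ^ 2) ->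
  incr a cs -> fv x L a cs <= NJ ^ 2.
Proof.
  intros HL Hb Hi. destruct (famf_ok x L a cs HL Hi) as [F1 [F2 F3]]. rewrite <- F3. apply Hb; auto.
  destruct cs; simpl; congruence.
Qed.
Lemma tail_g x NJ : (forall a cs, incr a cs -> gv x a cs <= NJ ^ 2) ->
  forall eps, 0 < eps -> exists k0, forall k cs, (k0 <= k)%nat -> incr k cs -> gv x k cs <= eps.
Proof.
  intros Hb eps Heps. apply NNPP. intro H.
  assert (Hbig : forall k0, exists k cs, (k0 <= k)%nat /\ incr k cs /\ eps < gv x k cs).
  { intro k0. apply NNPP. intro Hn. apply H. exists k0. intros k cs Hk Hi.
    apply Rnot_lt_le. intro Hlt. apply Hn. exists k, cs. auto. }
  assert (Hm : forall m, exists cs, incr 0 cs /\ INR m * eps <= gv x 0 cs).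
  { induction m.
    - exists []. simpl. lra.
    - destruct IHm as [cs [H1 H2]].
      destruct (Hbig (S (lastc 0 cs))) as [k [cs' [H3 [H4 H5]]]].
      exists (cs ++ k :: cs'). split.
      + apply incr_app. split; auto. simpl. split; [lia|auto].
      + rewrite gv_app. cbn [gv]. rewrite S_INR.
        pose proof (pow2_ge_0 (PS x k - PS x (lastc 0 cs))). lra. }
  destruct (INR_archimed eps (NJ ^ 2) Heps) as [n Hn].
  destruct (Hm n) as [cs [H1 H2]]. specialize (Hb _ _ H1). lra.
Qed.

Lemma conv x NJ : (forall a cs, incr a cs -> gv x a cs <= NJ ^ 2) ->
  exists L : R, is_lim_seq (PS x) L.
Proof.
  intros Hb.
  assert (Hc : ex_lim_seq_cauchy (PS x)).
  { intros [eps Heps]. simpl.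
    destruct (tail_g x NJ Hb (eps ^ 2 / 2)) as [k0 Hk0]; [nra|].
    exists k0. intros n m Hn Hm.
    assert (Hd : forall p q, (k0 <= p)%nat -> (p < q)%nat -> Rabs (PS x p - PS x q) < eps).
    { intros p q Hp Hpq. specialize (Hk0 p [q] Hp). simpl in Hk0.
      assert (Hq : (PS x q - PS x p) ^ 2 + 0 <= eps ^ 2 / 2) by (apply Hk0; split; auto).
      apply Rabs_def1; nra. }
    destruct (Compare_dec.lt_eq_lt_dec n m) as [[Hl|He]|Hl].
    - apply Hd; auto.
    - subst. replace (PS x m - PS x m) with 0 by ring. rewrite Rabs_R0. lra.
    - rewrite Rabs_minus_sym. apply Hd; auto. }
  apply ex_lim_seq_cauchy_corr in Hc. destruct Hc as [L HL]. exists L. exact HL.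
Qed.

Lemma tail_f x NJ (L : R) : is_lim_seq (PS x) L -> (forall a cs, incr a cs -> gv x a cs <= NJ ^ 2) ->
  forall eps, 0 < eps -> exists k0, forall k cs, (k0 <= k)%nat -> incr k cs -> fv x L k cs <= eps.
Proof.
  intros HL Hb eps Heps.
  destruct (tail_g x NJ Hb (eps / 2)) as [k1 Hk1]; [lra|].
  apply is_lim_seq_spec in HL.
  set (e := Rmin 1 (eps / 2)).
  assert (He : 0 < e) by (unfold e; apply Rmin_glb_lt; lra).
  destruct (HL (mkposreal e He)) as [k2 Hk2]. simpl in Hk2.
  exists (Nat.max k1 k2). intros k cs Hk Hi. rewrite fv_gv.
  assert (H1 : gv x k cs <= eps / 2) by (apply Hk1; auto; lia).
  assert (H2 : Rabs (PS x (lastc k cs) - L) < e).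
  { apply Hk2. pose proof (incr_le_last k cs Hi). lia. }
  assert (e <= 1) by apply Rmin_l. assert (e <= eps / 2) by apply Rmin_r.
  apply Rabs_def2 in H2. nra.
Qed.
Definition DJ (l : list interval) : Prop :=
  NoDup l /\ forall I J, In I l -> In J l -> I <> J -> disjoint_intervals I J.

Lemma wf_in I : interval_wf I -> in_interval I (fst I).
Proof. destruct I as [a [b|]]; unfold interval_wf, in_interval; simpl; intros; lia. Qed.

Lemma disj_sym I J : disjoint_intervals I J -> disjoint_intervals J I.
Proof. intros H [k [H1 H2]]. apply H. exists k. auto. Qed.

Lemma pd_DJ l : List.Forall interval_wf l -> pairwise_disjoint l -> DJ l.
Proof.
  intros Hw Hp. rewrite List.Forall_forall in Hw. split.
  - apply (proj2 (NoDup_nth l default_interval)). intros i j Hi Hj Heq.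
    destruct (Compare_dec.lt_eq_lt_dec i j) as [[Hl|He]|Hl]; auto; exfalso.
    + pose proof (Hp i j Hl Hj) as H. rewrite <- Heq in H. apply H.
      exists (fst (nth i l default_interval)). split; apply wf_in, Hw, nth_In; auto.
    + pose proof (Hp j i Hl Hi) as H. rewrite Heq in H. apply H.
      exists (fst (nth j l default_interval)). split; apply wf_in, Hw, nth_In; auto.
  - intros I J HI HJ Hne.
    destruct (In_nth l I default_interval HI) as [i [Hi <-]].
    destruct (In_nth l J default_interval HJ) as [j [Hj <-]].
    destruct (Compare_dec.lt_eq_lt_dec i j) as [[Hl|He]|Hl].
    + apply Hp; auto.
    + subst. congruence.
    + apply disj_sym. apply Hp; auto.
Qed.

Lemma max_fst (l : list interval) : l <> [] -> exists I, In I l /\ forall J, In J l -> (fst J <= fst I)%nat.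
Proof.
  induction l as [|I l IH]; intros H; [congruence|].
  destruct l as [|I' l'].
  - exists I. split; [left; auto|]. intros J [<-|[]]. lia.
  - destruct IH as [M [HM1 HM2]]; [congruence|].
    destruct (Nat.le_gt_cases (fst I) (fst M)).
    + exists M. split; [right; auto|]. intros J [<-|HJ]; auto.
    + exists I. split; [left; auto|]. intros J [<-|HJ]; [lia|]. specialize (HM2 J HJ). lia.
Qed.

Lemma before_max l I0 J : DJ l -> In I0 l -> (forall J, In J l -> (fst J <= fst I0)%nat) ->
  interval_wf I0 -> In J l -> J <> I0 -> exists b, snd J = Some b /\ (b < fst I0)%nat.
Proof.
  intros [_ Hd] HI0 Hmax Hw HJ Hne. pose proof (Hd J I0 HJ HI0 Hne) as Hdis.
  pose proof (Hmax J HJ) as Hle. pose proof (wf_in I0 Hw) as Hin.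
  destruct J as [f [b|]]; simpl in *.
  - exists b. split; auto. destruct (Nat.lt_ge_cases b (fst I0)); auto. exfalso.
    apply Hdis. exists (fst I0). split; auto. unfold in_interval; simpl. lia.
  - exfalso. apply Hdis. exists (fst I0). split; auto. unfold in_interval; simpl. lia.
Qed.

Lemma DJ_remove l1 l2 I : DJ (l1 ++ I :: l2) -> DJ (l1 ++ l2).
Proof.
  intros [Hn Hd]. split; [eapply NoDup_remove_1; eauto|].
  intros J K HJ HK Hne. apply Hd; auto; apply in_app_iff; apply in_app_iff in HJ, HK;
  simpl; tauto.
Qed.

Lemma sqsum_mid x l1 l2 I : sqsum x (l1 ++ I :: l2) = isum x I ^ 2 + sqsum x (l1 ++ l2).
Proof. rewrite !sqsum_app. simpl. lra. Qed.

Lemma Q_lemma x : forall n l a, (length l <= n)%nat -> DJ l -> (forall I, In I l -> interval_wf I) ->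
  (forall I, In I l -> exists b, snd I = Some b /\ (b < a)%nat) ->
  exists cs, incr 0 cs /\ (lastc 0 cs <= a)%nat /\ sqsum x l <= gv x 0 cs.
Proof.
  induction n; intros l a Hlen HD Hw Hb.
  - destruct l; simpl in Hlen; [|lia]. exists []. simpl. repeat split; lia || lra.
  - destruct l as [|I1 l1'] eqn:El.
    + exists []. simpl. repeat split; lia || lra.
    + rewrite <- El in *. assert (Hne : l <> []) by (subst; congruence).
      destruct (max_fst l Hne) as [I0 [HI0 Hmax]].
      destruct (in_split I0 l HI0) as [l1 [l2 Hsplit]].
      destruct (Hb I0 HI0) as [q [Hq Hqa]].
      destruct I0 as [p s]. simpl in Hq. subst s.
      pose proof (Hw _ HI0) as Hw0. unfold interval_wf in Hw0; simpl in Hw0.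
      assert (Hrest : forall J, In J (l1 ++ l2) -> exists b, snd J = Some b /\ (b < p)%nat).
      { intros J HJ. assert (HJl : In J l) by (rewrite Hsplit; apply in_app_iff in HJ; apply in_app_iff; simpl; tauto).
        assert (HJne : J <> (p, Some q)).
        { intro E. subst J. rewrite Hsplit in HD. destruct HD as [HN _]. eapply NoDup_remove_2; eauto. }
        destruct (before_max l (p, Some q) J HD HI0 Hmax (Hw _ HI0) HJl HJne) as [b Hb']. simpl in Hb'. eauto. }
      assert (Hlen' : (length (l1 ++ l2) <= n)%nat).
      { assert (length l = S (length (l1 ++ l2))) by (rewrite Hsplit, !length_app; simpl; lia). lia. }
      rewrite Hsplit in HD. pose proof (DJ_remove _ _ _ HD) as HD'.
      assert (Hw' : forall I, In I (l1 ++ l2) -> interval_wf I).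
      { intros J HJ. apply Hw. rewrite Hsplit. apply in_app_iff in HJ; apply in_app_iff; simpl; tauto. }
      destruct (IHn (l1 ++ l2) p Hlen' HD' Hw' Hrest) as [cs' [H1 [H2 H3]]].
      rewrite Hsplit, sqsum_mid.
      assert (Hisum : isum x (p, Some q) = PS x (S q) - PS x p) by (unfold isum; simpl; apply sum_n_m_PS; auto).
      rewrite Hisum.
      destruct (Nat.lt_ge_cases (lastc 0 cs') p) as [Hc|Hc].
      * exists (cs' ++ [p; S q]). split; [|split].
        -- apply incr_app. split; auto. simpl. repeat split; lia.
        -- rewrite lastc_app. simpl. lia.
        -- rewrite gv_app. cbn [gv]. pose proof (pow2_ge_0 (PS x p - PS x (lastc 0 cs'))). lra.
      * assert (lastc 0 cs' = p) as Ec by lia.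
        exists (cs' ++ [S q]). split; [|split].
        -- apply incr_app. split; auto. simpl. repeat split; lia.
        -- rewrite lastc_app. simpl. lia.
        -- rewrite gv_app, Ec. cbn [gv]. lra.
Qed.

Lemma convert x (L : R) l : is_lim_seq (PS x) L -> l <> [] -> List.Forall interval_wf l -> pairwise_disjoint l ->
  exists cs, incr 0 cs /\ sqsum x l <= fv x L 0 cs.
Proof.
  intros HL Hne Hw Hp. pose proof (pd_DJ l Hw Hp) as HD.
  rewrite List.Forall_forall in Hw.
  destruct (max_fst l Hne) as [I0 [HI0 Hmax]].
  destruct I0 as [p [q|]] eqn:EI0.
  - assert (Hb : forall J, In J l -> exists b, snd J = Some b /\ (b < S q)%nat).
    { intros J HJ. destruct (classic (J = I0)) as [E|E].
      - subst. exists q. simpl. split; auto.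
      - subst I0. destruct (before_max l _ J HD HI0 Hmax (Hw _ HI0) HJ E) as [b [Hb1 Hb2]].
        exists b. split; auto. pose proof (Hw _ HI0). unfold interval_wf in H; simpl in *. lia. }
    destruct (Q_lemma x (length l) l (S q) (le_n _) HD Hw Hb) as [cs [H1 [H2 H3]]].
    exists cs. split; auto. rewrite fv_gv. pose proof (pow2_ge_0 (L - PS x (lastc 0 cs))). lra.
  - destruct (in_split _ l HI0) as [l1 [l2 Hsplit]].
    assert (Hrest : forall J, In J (l1 ++ l2) -> exists b, snd J = Some b /\ (b < p)%nat).
    { intros J HJ. assert (HJl : In J l) by (rewrite Hsplit; apply in_app_iff in HJ; apply in_app_iff; simpl; tauto).
      assert (HJne : J <> (p, None)).
      { intro E. subst J. rewrite Hsplit in HD. destruct HD as [HN _]. eapply NoDup_remove_2; eauto. }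
      destruct (before_max l (p, None) J HD HI0 Hmax (Hw _ HI0) HJl HJne) as [b Hb']. simpl in Hb'. eauto. }
    rewrite Hsplit in HD. pose proof (DJ_remove _ _ _ HD) as HD'.
    assert (Hw' : forall I, In I (l1 ++ l2) -> interval_wf I).
    { intros J HJ. apply Hw. rewrite Hsplit. apply in_app_iff in HJ; apply in_app_iff; simpl; tauto. }
    destruct (Q_lemma x _ (l1 ++ l2) p (le_n _) HD' Hw' Hrest) as [cs' [H1 [H2 H3]]].
    rewrite Hsplit, sqsum_mid, (isum_inf x L) by auto.
    destruct (Nat.lt_ge_cases (lastc 0 cs') p) as [Hc|Hc].
    + exists (cs' ++ [p]). split.
      * apply incr_app. split; auto. simpl. repeat split; lia.
      * rewrite fv_app. cbn [fv]. pose proof (pow2_ge_0 (PS x p - PS x (lastc 0 cs'))). lra.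
    + assert (lastc 0 cs' = p) as Ec by lia.
      exists cs'. split; auto. rewrite fv_gv, Ec. lra.
Qed.
Fixpoint cutsl (A : nat -> bool) (j : nat) : list nat :=
  match j with O => [] | S j' => cutsl A j' ++ (if A j' then [S j'] else []) end.

Lemma cutsl_incr A j : incr 0 (cutsl A j) /\ (lastc 0 (cutsl A j) <= j)%nat.
Proof.
  induction j; simpl; [split; [exact I|lia]|]. destruct IHj as [H1 H2].
  destruct (A j); rewrite incr_app, lastc_app; simpl.
  - split; [split; auto; split; [lia|exact I]|lia].
  - split; [split; auto; exact I|lia].
Qed.

Lemma cutsl_ext A B j : (forall i, (i < j)%nat -> A i = B i) -> cutsl A j = cutsl B j.
Proof.
  induction j; intros H; simpl; auto. rewrite IHj by (intros; apply H; lia). rewrite H by lia. auto.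
Qed.

Lemma cutsl_split A k d : exists cs2, cutsl A (k + d) = cutsl A k ++ cs2 /\ incr k cs2 /\
  (lastc k cs2 <= k + d)%nat.
Proof.
  induction d.
  - exists []. rewrite Nat.add_0_r, app_nil_r. simpl. split; [reflexivity|]. split; [exact I|lia].
  - destruct IHd as [cs2 [H1 [H2 H3]]]. rewrite Nat.add_succ_r. simpl. rewrite H1.
    exists (cs2 ++ (if A (k + d)%nat then [S (k + d)] else [])). rewrite app_assoc. split; auto.
    rewrite incr_app, lastc_app. destruct (A (k + d)%nat); simpl.
    + split; [split; auto; split; [lia|exact I]|lia].
    + split; [split; auto; exact I|lia].
Qed.

Lemma cutsl_split' A k j : (k <= j)%nat -> exists cs2, cutsl A j = cutsl A k ++ cs2 /\ incr k cs2.
Proof.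
  intros H. replace j with (k + (j - k))%nat by lia. destruct (cutsl_split A k (j - k)) as [cs2 [? [? ?]]].
  eauto.
Qed.

Definition ind (cs : list nat) (m : nat) : bool := if in_dec Nat.eq_dec (S m) cs then true else false.

Lemma incr_head_in k cs : incr k cs -> In (S k) cs -> exists r, cs = S k :: r /\ incr (S k) r.
Proof.
  destruct cs as [|b r]; simpl; [tauto|]. intros [H1 H2] [E|Hin].
  - subst. eauto.
  - pose proof (incr_In _ _ _ H2 Hin). lia.
Qed.

Lemma incr_not_in k cs : incr k cs -> ~ In (S k) cs -> incr (S k) cs.
Proof.
  destruct cs as [|b r]; simpl; [tauto|]. intros [H1 H2] Hn. split; auto.
  destruct (Nat.eq_dec b (S k)); [subst; tauto|lia].
Qed.

Lemma split_ind cs : incr 0 cs -> forall k, exists cs2, cs = cutsl (ind cs) k ++ cs2 /\ incr k cs2.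
Proof.
  intros Hcs. induction k.
  - exists cs. simpl. auto.
  - destruct IHk as [cs2 [E Hi]]. simpl. unfold ind at 2.
    destruct (in_dec Nat.eq_dec (S k) cs) as [Hin|Hin].
    + assert (Hin2 : In (S k) cs2).
      { rewrite E in Hin. apply in_app_iff in Hin. destruct Hin as [Hin|Hin]; auto.
        destruct (cutsl_incr (ind cs) k) as [Ha Hb]. pose proof (incr_In _ _ _ Ha Hin). lia. }
      destruct (incr_head_in _ _ Hi Hin2) as [r [Er Hr]]. exists r. split; auto.
      rewrite <- app_assoc. simpl. rewrite <- Er. exact E.
    + exists cs2. rewrite app_nil_r. split; auto. apply incr_not_in; auto.
      intro H. apply Hin. rewrite E. apply in_app_iff. auto.
Qed.

(* Koenig-type compactness *)
Definition agree (b : nat -> bool) (p : list bool) : Prop :=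
  forall i, (i < length p)%nat -> b i = nth i p false.
Definition Good (beta : nat -> nat -> bool) (p : list bool) : Prop :=
  forall M, exists N, (M <= N)%nat /\ agree (beta N) p.

Fixpoint pre (beta : nat -> nat -> bool) (k : nat) : list bool :=
  match k with
  | O => []
  | S k' => let p := pre beta k' in
      if excluded_middle_informative (Good beta (p ++ [false])) then p ++ [false] else p ++ [true]
  end.

Lemma pre_len beta k : length (pre beta k) = k.
Proof.
  induction k; simpl; auto.
  destruct (excluded_middle_informative _); rewrite length_app, IHk; simpl; lia.
Qed.

Lemma pre_good beta k : Good beta (pre beta k).
Proof.
  induction k; simpl.
  - intros M. exists M. split; auto. intros i Hi. simpl in Hi. lia.
  - destruct (excluded_middle_informative _) as [Hg|Hg]; auto.
    apply NNPP. intros Hn. apply Hg. clear Hg.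
    apply NNPP. intros Hg.
    apply not_all_ex_not in Hn. destruct Hn as [M1 HM1].
    apply not_all_ex_not in Hg. destruct Hg as [M0 HM0].
    destruct (IHk (Nat.max M0 M1)) as [N [HN Ha]].
    assert (Hext : forall bb, beta N k = bb -> agree (beta N) (pre beta k ++ [bb])).
    { intros bb Hbb i Hi. rewrite length_app, pre_len in Hi. simpl in Hi.
      destruct (Nat.lt_ge_cases i k).
      - rewrite app_nth1 by (rewrite pre_len; auto). apply Ha. rewrite pre_len; auto.
      - assert (i = k) by lia. subst. rewrite app_nth2 by (rewrite pre_len; lia).
        rewrite pre_len, Nat.sub_diag. simpl. auto. }
    destruct (beta N k) eqn:Eb.
    + apply HM1. exists N. split; [lia|]. apply Hext; auto.
    + apply HM0. exists N. split; [lia|]. apply Hext; auto.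
Qed.

Lemma pre_prefix beta k d i : (i < k)%nat -> nth i (pre beta (k + d)) false = nth i (pre beta k) false.
Proof.
  intros Hi. induction d.
  - rewrite Nat.add_0_r. auto.
  - rewrite Nat.add_succ_r. simpl. destruct (excluded_middle_informative _);
    rewrite app_nth1 by (rewrite pre_len; lia); auto.
Qed.

Definition Astar (beta : nat -> nat -> bool) (m : nat) : bool := nth m (pre beta (S m)) false.

Lemma Astar_good beta k M : exists N, (M <= N)%nat /\ forall i, (i < k)%nat -> beta N i = Astar beta i.
Proof.
  destruct (pre_good beta k M) as [N [HN Ha]]. exists N. split; auto.
  intros i Hi. rewrite Ha by (rewrite pre_len; auto). unfold Astar.
  replace k with (S i + (k - S i))%nat by lia. apply pre_prefix. lia.
Qed.

Lemma alg u v R d : 0 <= R -> 0 <= d -> v ^ 2 + R <= d ^ 2 ->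
  (u + v) ^ 2 + R <= u ^ 2 + 2 * Rabs u * d + d ^ 2 /\ u ^ 2 - 2 * Rabs u * d <= (u + v) ^ 2 + R.
Proof.
  intros HR Hd Hv.
  assert (Hvd : Rabs v <= d).
  { destruct (Rcase_abs v); [rewrite Rabs_left|rewrite Rabs_right]; auto; nra. }
  assert (Huv : Rabs (u * v) <= Rabs u * d).
  { rewrite Rabs_mult. apply Rmult_le_compat_l; auto. apply Rabs_pos. }
  pose proof (Rle_abs (u * v)). pose proof (Rle_abs (- (u * v))). rewrite Rabs_Ropp in H0.
  split; nra.
Qed.

Lemma UpLo x (L : R) c k cs2 d : incr k cs2 -> 0 <= d -> fv x L k cs2 <= d ^ 2 ->
  fv x L c cs2 <= (PS x k - PS x c) ^ 2 + 2 * Rabs (PS x k - PS x c) * d + d ^ 2 /\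
  (PS x k - PS x c) ^ 2 - 2 * Rabs (PS x k - PS x c) * d <= fv x L c cs2.
Proof.
  intros Hi Hd Hf. destruct cs2 as [|b r]; simpl in Hf |- *.
  - replace (L - PS x c) with ((PS x k - PS x c) + (L - PS x k)) by ring.
    pose proof (alg (PS x k - PS x c) (L - PS x k) 0 d (Rle_refl 0) Hd ltac:(lra)). lra.
  - replace (PS x b - PS x c) with ((PS x k - PS x c) + (PS x b - PS x k)) by ring.
    apply alg; auto. apply fv_ge0.
Qed.
Lemma main_lower x (L : R) NJ : is_lim_seq (PS x) L -> 0 <= NJ ->
  (forall a cs, incr a cs -> gv x a cs <= NJ ^ 2) ->
  (forall N, exists cs, incr 0 cs /\ NJ ^ 2 - / (INR N + 1) <= fv x L 0 cs) ->
  exists A : nat -> bool, forall eps, 0 < eps -> exists k, forall j, (k <= j)%nat ->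
    NJ ^ 2 - eps <= fv x L 0 (cutsl A j).
Proof.
  intros HL HNJ Hg Happ.
  set (csN := fun N => proj1_sig (constructive_indefinite_description _ (Happ N))).
  assert (HcsN : forall N, incr 0 (csN N) /\ NJ ^ 2 - / (INR N + 1) <= fv x L 0 (csN N)).
  { intros N. exact (proj2_sig (constructive_indefinite_description _ (Happ N))). }
  set (beta := fun N => ind (csN N)).
  exists (Astar beta). intros eps Heps.
  set (e0 := eps / (2 * (4 * NJ + 1))).
  assert (He0 : e0 * (2 * (4 * NJ + 1)) = eps) by (unfold e0; field; lra).
  assert (He0p : 0 < e0) by (unfold e0; apply Rdiv_lt_0_compat; lra).
  set (d := Rmin 1 e0).
  assert (Hd1 : d <= 1) by apply Rmin_l. assert (Hd2 : d <= e0) by apply Rmin_r.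
  assert (Hd0 : 0 < d) by (unfold d; apply Rmin_glb_lt; lra).
  destruct (tail_f x NJ L HL Hg (d ^ 2)) as [k Hk]; [nra|].
  destruct (INR_archimed (eps / 2) 1) as [M HM]; [lra|].
  destruct (Astar_good beta k M) as [N [HN Hag]].
  destruct (HcsN N) as [Hinc Happr].
  destruct (split_ind _ Hinc k) as [cs2 [Ecs Hi2]].
  rewrite (cutsl_ext (ind (csN N)) (Astar beta) k Hag) in Ecs.
  set (A := Astar beta) in *.
  destruct (cutsl_incr A k) as [HcI Hck].
  set (c := lastc 0 (cutsl A k)) in *.
  set (u := PS x k - PS x c).
  assert (Hu : Rabs u <= NJ).
  { assert (Hu2 : u ^ 2 <= NJ ^ 2).
    { destruct (Nat.eq_dec c k) as [E|E].
      - unfold u. rewrite E. replace (PS x k - PS x k) with 0 by ring. nra.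
      - pose proof (Hg c [k] ltac:(simpl; split; [lia|exact I])) as H. simpl in H. unfold u. nra. }
    destruct (Rcase_abs u); [rewrite Rabs_left|rewrite Rabs_right]; auto; nra. }
  pose proof (UpLo x L c k cs2 d Hi2 (Rlt_le _ _ Hd0) (Hk k cs2 (le_n _) Hi2)) as [Up _].
  rewrite Ecs, fv_app in Happr. fold c in Happr.
  assert (Hw : / (INR N + 1) <= eps / 2).
  { pose proof (le_INR _ _ HN). pose proof (pos_INR M).
    assert (Hw1 : / (INR N + 1) * (INR N + 1) = 1) by (field; lra).
    assert (0 < / (INR N + 1)) by (apply Rinv_0_lt_compat; lra). nra. }
  assert (Hud : 4 * Rabs u * d + d ^ 2 <= eps / 2).
  { pose proof (Rabs_pos u). assert (4 * Rabs u * d <= 4 * NJ * d) by nra.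
    assert (d ^ 2 <= d) by nra. assert ((4 * NJ + 1) * d <= (4 * NJ + 1) * e0) by nra. nra. }
  exists k. intros j Hj. destruct (cutsl_split' A k j Hj) as [cs2j [Ej Hij]].
  pose proof (UpLo x L c k cs2j d Hij (Rlt_le _ _ Hd0) (Hk k cs2j (le_n _) Hij)) as [_ Lo].
  rewrite Ej, fv_app. fold c. fold u in Up, Lo. lra.
Qed.
Lemma block_start_lastc A m : block_start A m = lastc 0 (cutsl A m).
Proof.
  induction m; simpl; auto. unfold block_start in *. simpl.
  destruct (A m); rewrite lastc_app; simpl; auto.
Qed.

Definition termA (x : nat -> R) (A : nat -> bool) (m : nat) : R :=
  if A m then (blockA x A m) ^ 2 else 0.

Lemma blockA_PS x A m : blockA x A m = PS x (S m) - PS x (block_start A m).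
Proof.
  unfold blockA. apply sum_n_m_PS. rewrite block_start_lastc. apply cutsl_incr.
Qed.

Lemma PS_termA x A j : PS (termA x A) j = gv x 0 (cutsl A j).
Proof.
  induction j; simpl; auto. rewrite IHj, gv_app. unfold termA.
  rewrite blockA_PS, block_start_lastc. destruct (A j); simpl; lra.
Qed.

Lemma fv_cutsl x (L : R) A j : fv x L 0 (cutsl A j) = PS (termA x A) j + (L - PS x (block_start A j)) ^ 2.
Proof. rewrite fv_gv, PS_termA, block_start_lastc. reflexivity. Qed.

Lemma termA_ge0 x A m : 0 <= termA x A m.
Proof. unfold termA. destruct (A m); [apply pow2_ge_0|lra]. Qed.

Lemma PS_mono a : (forall m, 0 <= a m) -> forall j d, PS a j <= PS a (d + j).
Proof. intros H j d. induction d; simpl; [lra|]. specialize (H (d + j)%nat). lra. Qed.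

Lemma PS_stable a t : (forall n, (t <= n)%nat -> a n = 0) -> forall d, PS a (d + t) = PS a t.
Proof. intros H d. induction d; simpl; auto. rewrite IHd, H by lia. lra. Qed.

Lemma Series_ev_zero a t : (forall n, (t <= n)%nat -> a n = 0) -> Series a = PS a t.
Proof.
  intros H. unfold Series.
  assert (Hl : is_lim_seq (sum_n a) (PS a t)).
  { apply is_lim_seq_ext_loc with (u := fun _ => PS a t); [|apply is_lim_seq_const].
    exists t. intros n Hn. rewrite PS_sum_n. replace (S n) with ((S n - t) + t)%nat by lia.
    rewrite PS_stable; auto. }
  rewrite (is_lim_seq_unique _ _ Hl). reflexivity.
Qed.

Lemma cutsl_stable A t : (forall n, (t <= n)%nat -> A n = false) -> forall d, cutsl A (d + t) = cutsl A t.
Proof. intros H d. induction d; simpl; auto. rewrite IHd, H by lia. apply app_nil_r. Qed.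

Lemma le_eps a b : (forall eps, 0 < eps -> b - eps <= a) -> b <= a.
Proof.
  intros H. destruct (Rle_lt_dec b a); auto. specialize (H ((b - a) / 2) ltac:(lra)). lra.
Qed.

Lemma Phi_eq x (L : R) NJ A : is_lim_seq (PS x) L -> 0 <= NJ ->
  (forall j, fv x L 0 (cutsl A j) <= NJ ^ 2) ->
  (forall eps, 0 < eps -> exists k, forall j, (k <= j)%nat -> NJ ^ 2 - eps <= fv x L 0 (cutsl A j)) ->
  Series (fun m => if A m then (blockA x A m) ^ 2 else 0) + tail_term x A = NJ ^ 2.
Proof.
  intros HL HNJ Hup Hlo. fold (termA x A). unfold tail_term.
  destruct (excluded_middle_informative (finite_set A)) as [Hf|Hf].
  - set (t := proj1_sig (constructive_indefinite_description _ Hf)).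
    assert (Ht : forall n, (t <= n)%nat -> A n = false)
      by exact (proj2_sig (constructive_indefinite_description _ Hf)).
    cbv zeta. fold t. rewrite (Series_shift x L) by auto.
    rewrite (Series_ev_zero _ t).
    2: { intros n Hn. unfold termA. rewrite Ht; auto. }
    rewrite <- fv_cutsl. apply Rle_antisym; auto.
    apply le_eps. intros eps Heps. destruct (Hlo eps Heps) as [k Hk].
    specialize (Hk (k + t)%nat ltac:(lia)). rewrite cutsl_stable in Hk; auto.
  - rewrite Rplus_0_r.
    assert (Hex : ex_finite_lim_seq (PS (termA x A))).
    { apply ex_finite_lim_seq_incr with (M := NJ ^ 2).
      - intros n. simpl. pose proof (termA_ge0 x A n). lra.
      - intros n. specialize (Hup n). rewrite fv_cutsl in Hup.
        pose proof (pow2_ge_0 (L - PS x (block_start A n))). lra. }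
    destruct Hex as [Sg HSg].
    assert (ES : Series (termA x A) = Sg).
    { unfold Series. rewrite (Lim_seq_ext _ (fun n => PS (termA x A) (S n))) by (intros; apply PS_sum_n).
      rewrite Lim_seq_incr_1, (is_lim_seq_unique _ _ HSg). reflexivity. }
    rewrite ES.
    assert (Hge : forall j, PS (termA x A) j <= Sg).
    { intros j. assert (Hs : is_lim_seq (fun n => PS (termA x A) (n + j)) Sg)
        by (apply (proj1 (is_lim_seq_incr_n _ j Sg)); auto).
      pose proof (is_lim_seq_le (fun _ => PS (termA x A) j) (fun n => PS (termA x A) (n + j)) (PS (termA x A) j) Sg) as H.
      simpl in H. apply H; auto; [|apply is_lim_seq_const].
      intros n. apply PS_mono. apply termA_ge0. }
    apply Rle_antisym.
    + pose proof (is_lim_seq_le (PS (termA x A)) (fun _ => NJ ^ 2) Sg (NJ ^ 2)) as H.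
      simpl in H. apply H; auto; [|apply is_lim_seq_const].
      intros n. specialize (Hup n). rewrite fv_cutsl in Hup.
      pose proof (pow2_ge_0 (L - PS x (block_start A n))). lra.
    + apply le_eps. intros eps Heps.
      destruct (Hlo (eps / 2) ltac:(lra)) as [k Hk].
      pose proof HL as HL'. apply is_lim_seq_spec in HL'.
      set (e := Rmin 1 (eps / 2)).
      assert (He : 0 < e) by (unfold e; apply Rmin_glb_lt; lra).
      destruct (HL' (mkposreal e He)) as [n0 Hn0]. simpl in Hn0.
      assert (e <= 1) by apply Rmin_l. assert (e <= eps / 2) by apply Rmin_r.
      assert (Hinf : exists n, (Nat.max k n0 <= n)%nat /\ A n = true).
      { apply NNPP. intro Hn. apply Hf. exists (Nat.max k n0). intros n Hn'.
        destruct (A n) eqn:E; auto. exfalso. apply Hn. eauto. }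
      destruct Hinf as [n [Hn HA]].
      specialize (Hk (S n) ltac:(lia)). rewrite fv_cutsl in Hk.
      assert (Hbs : block_start A (S n) = S n) by (unfold block_start; simpl; rewrite HA; auto).
      rewrite Hbs in Hk. specialize (Hn0 (S n) ltac:(lia)). apply Rabs_def2 in Hn0.
      specialize (Hge (S n)). nra.
Qed.
Lemma least_ex (P : nat -> Prop) n : P n -> exists k, P k /\ forall j, (j < k)%nat -> ~ P j.
Proof.
  induction n as [n IH] using (well_founded_induction Wf_nat.lt_wf). intros Hn.
  destruct (classic (exists j, (j < n)%nat /\ P j)) as [[j [Hj HPj]]|Hno].
  - apply (IH j Hj HPj).
  - exists n. split; auto. intros j Hj HPj. apply Hno. eauto.
Qed.

Lemma greatest_ex (P : nat -> Prop) n b : P n -> (n <= b)%nat ->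
  exists k, (k <= b)%nat /\ P k /\ forall j, (k < j <= b)%nat -> ~ P j.
Proof.
  intros Hn Hb.
  destruct (least_ex (fun j => (j <= b)%nat /\ P (b - j)%nat) (b - n)%nat) as [j0 [[Hj0 HP] Hmin]].
  { split; [lia|]. replace (b - (b - n))%nat with n by lia. auto. }
  exists (b - j0)%nat. split; [lia|]. split; auto.
  intros j Hj HPj. apply (Hmin (b - j)%nat); [lia|]. split; [lia|]. replace (b - (b - j))%nat with j by lia. auto.
Qed.

Lemma PS_zero_range (y : nat -> R) a d : (forall n, (a <= n < a + d)%nat -> y n = 0) -> PS y (a + d) = PS y a.
Proof.
  induction d; intros H; [rewrite Nat.add_0_r; auto|].
  rewrite Nat.add_succ_r. simpl. rewrite IHd by (intros; apply H; lia). rewrite H by lia. lra.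
Qed.

Lemma PS_zero_range' (y : nat -> R) a b : (a <= b)%nat -> (forall n, (a <= n < b)%nat -> y n = 0) -> PS y b = PS y a.
Proof. intros H1 H2. replace b with (a + (b - a))%nat by lia. apply PS_zero_range. intros; apply H2; lia. Qed.

Definition Wp (x : nat -> R) (A : nat -> bool) (m : nat) : Prop :=
  A m = true /\ exists n, (block_start A m <= n <= m)%nat /\ x n <> 0.

Definition HullSpec (x : nat -> R) (A : nat -> bool) (m : nat) (I : interval) : Prop :=
  exists a b, I = (a, Some b) /\ (block_start A m <= a <= b)%nat /\ (b <= m)%nat /\ x a <> 0 /\ x b <> 0 /\
    (forall n, (block_start A m <= n < a)%nat -> x n = 0) /\ (forall n, (b < n <= m)%nat -> x n = 0).

Lemma hull_ex x A m : (exists n, (block_start A m <= n <= m)%nat /\ x n <> 0) -> exists I, HullSpec x A m I.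
Proof.
  intros [n0 [Hn0 Hx0]]. set (s := block_start A m) in *.
  destruct (least_ex (fun n => (s <= n)%nat /\ x n <> 0) n0) as [a [[Ha1 Ha2] Hamin]]; [split; [lia|auto]|].
  destruct (greatest_ex (fun n => (s <= n)%nat /\ x n <> 0) n0 m) as [b [Hb1 [[Hb2 Hb3] Hbmax]]]; [split; [lia|auto]|lia|].
  assert (a <= n0)%nat.
  { destruct (Nat.le_gt_cases a n0); auto. exfalso. apply (Hamin n0); auto. split; [lia|auto]. }
  assert (n0 <= b)%nat.
  { destruct (Nat.le_gt_cases n0 b); auto. exfalso. apply (Hbmax n0); [lia|]. split; [lia|auto]. }
  exists (a, Some b), a, b. split; auto. split; [lia|]. split; [lia|]. split; auto. split; auto. split.
  - intros n Hn. apply NNPP. intros Hx. apply (Hamin n); [lia|]. split; [lia|auto].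
  - intros n Hn. apply NNPP. intros Hx. apply (Hbmax n); [lia|]. split; [lia|auto].
Qed.

Definition hullf (x : nat -> R) (A : nat -> bool) (m : nat) : interval :=
  epsilon (inhabits default_interval) (HullSpec x A m).

Lemma hullf_spec x A m : Wp x A m -> HullSpec x A m (hullf x A m).
Proof. intros [_ H]. unfold hullf. apply epsilon_spec. apply hull_ex; auto. Qed.

Lemma bs_le_m A m : (block_start A m <= m)%nat.
Proof. rewrite block_start_lastc. apply cutsl_incr. Qed.

Lemma hull_isum x A m I : HullSpec x A m I -> isum x I = blockA x A m.
Proof.
  intros [a [b [-> [Hab [Hbm [Ha [Hb [Z1 Z2]]]]]]]].
  unfold isum; simpl. rewrite sum_n_m_PS by lia. rewrite blockA_PS.
  rewrite (PS_zero_range' x (S b) (S m)) by (try lia; intros; apply Z2; lia).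
  rewrite (PS_zero_range' x (block_start A m) a) by (try lia; intros; apply Z1; lia). reflexivity.
Qed.

Lemma termA_notW x A m : ~ Wp x A m -> termA x A m = 0.
Proof.
  intros Hn. unfold termA. destruct (A m) eqn:E; auto.
  rewrite blockA_PS. rewrite (PS_zero_range' x (block_start A m) (S m)).
  - simpl. lra.
  - pose proof (bs_le_m A m). lia.
  - intros n Hn'. apply NNPP. intro Hx. apply Hn. split; auto. exists n. split; [lia|auto].
Qed.

Lemma In_cutsl A p m : A p = true -> (p < m)%nat -> In (S p) (cutsl A m).
Proof.
  induction m; intros Hp Hpm; [lia|]. simpl. apply in_app_iff.
  destruct (Nat.eq_dec p m).
  - subst. right. rewrite Hp. left; auto.
  - left. apply IHm; auto; lia.
Qed.

Lemma bs_ge A p m : A p = true -> (p < m)%nat -> (S p <= block_start A m)%nat.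
Proof.
  intros Hp Hpm. rewrite block_start_lastc. destruct (cutsl_incr A m) as [Hi _].
  pose proof (incr_In _ _ _ Hi (In_cutsl A p m Hp Hpm)). lia.
Qed.

Lemma bs_le A n d : (forall p, (n <= p < n + d)%nat -> A p = false) -> (block_start A (n + d) <= n)%nat.
Proof.
  induction d; intros H.
  - rewrite Nat.add_0_r. apply bs_le_m.
  - rewrite Nat.add_succ_r. unfold block_start in *. simpl. rewrite H by lia. apply IHd. intros; apply H; lia.
Qed.

Lemma locate A n : (exists m, (n <= m)%nat /\ A m = true /\ (block_start A m <= n)%nat) \/
  (forall m, (n <= m)%nat -> A m = false).
Proof.
  destruct (classic (exists m, (n <= m)%nat /\ A m = true)) as [[m0 Hm0]|Hno].
  - left. destruct (least_ex (fun m => (n <= m)%nat /\ A m = true) m0 Hm0) as [k [[Hk1 Hk2] Hmin]].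
    exists k. split; auto. split; auto. replace k with (n + (k - n))%nat by lia. apply bs_le.
    intros p Hp. destruct (A p) eqn:E; auto. exfalso. apply (Hmin p); [lia|]. split; [lia|auto].
  - right. intros m Hm. destruct (A m) eqn:E; auto. exfalso. apply Hno. eauto.
Qed.

Definition Wb (x : nat -> R) (A : nat -> bool) (m : nat) : bool :=
  if excluded_middle_informative (Wp x A m) then true else false.

Fixpoint wl (x : nat -> R) (A : nat -> bool) (t : nat) : list interval :=
  match t with O => [] | S t' => wl x A t' ++ (if Wb x A t' then [hullf x A t'] else []) end.

Lemma wl_in x A t I : In I (wl x A t) -> exists m, (m < t)%nat /\ Wp x A m /\ HullSpec x A m I.
Proof.
  induction t; simpl; [tauto|]. intros H. apply in_app_iff in H. destruct H as [H|H].
  - destruct (IHt H) as [m [? ?]]. exists m. split; [lia|auto].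
  - unfold Wb in H. destruct (excluded_middle_informative (Wp x A t)) as [Hw|Hw]; [|destruct H].
    destruct H as [<-|[]]. exists t. split; [lia|]. split; auto. apply hullf_spec; auto.
Qed.

Lemma wl_sqsum x A t : sqsum x (wl x A t) = PS (termA x A) t.
Proof.
  induction t; simpl; auto. rewrite sqsum_app, IHt. unfold Wb.
  destruct (excluded_middle_informative (Wp x A t)) as [Hw|Hw]; simpl.
  - rewrite (hull_isum x A t _ (hullf_spec x A t Hw)). unfold termA. destruct Hw as [HA _]. rewrite HA. lra.
  - rewrite termA_notW by auto. lra.
Qed.

Lemma wl_stable x A t1 d : (forall m, (t1 <= m < t1 + d)%nat -> ~ Wp x A m) -> wl x A (t1 + d) = wl x A t1.
Proof.
  induction d; intros H; [rewrite Nat.add_0_r; auto|]. rewrite Nat.add_succ_r. simpl.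
  rewrite IHd by (intros; apply H; lia). unfold Wb.
  destruct (excluded_middle_informative _) as [Hw|Hw]; [exfalso; apply (H (t1 + d)%nat); auto; lia|].
  apply app_nil_r.
Qed.

Fixpoint ordl (l : list interval) : Prop :=
  match l with
  | [] => True
  | I0 :: r => (match r with [] => True | J0 :: _ => ordered_pair I0 J0 end) /\ ordl r
  end.

Lemma ordl_app1 l J : ordl l -> (forall I, In I l -> ordered_pair I J) -> ordl (l ++ [J]).
Proof.
  induction l as [|I r IH]; intros H1 H2; simpl; [split; auto|].
  destruct H1 as [H1 H3]. split.
  - destruct r as [|K r']; simpl; [apply H2; left; auto|exact H1].
  - apply IH; auto. intros; apply H2; right; auto.
Qed.

Lemma ordl_nth l : ordl l -> forall i, (S i < length l)%nat ->
  ordered_pair (nth i l default_interval) (nth (S i) l default_interval).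
Proof.
  induction l as [|I r IH]; intros H i Hi; simpl in Hi; [lia|]. destruct H as [H1 H2].
  destruct i as [|i].
  - destruct r as [|J r']; simpl in *; [lia|exact H1].
  - simpl. apply IH; auto. lia.
Qed.

Lemma wl_ordl x A t : ordl (wl x A t).
Proof.
  induction t; simpl; auto. unfold Wb.
  destruct (excluded_middle_informative (Wp x A t)) as [Hw|Hw]; [|rewrite app_nil_r; auto].
  apply ordl_app1; auto. intros I HI. destruct (wl_in x A t I HI) as [m [Hm [[HAm _] Hs]]].
  destruct Hs as [a [b [-> [_ [Hbm _]]]]].
  destruct (hullf_spec x A t Hw) as [a' [b' [E [Ha' _]]]]. rewrite E. unfold ordered_pair; simpl.
  pose proof (bs_ge A m t HAm Hm). lia.
Qed.

Lemma finF_ok x NJ l0 J : normJ x = Finite NJ -> 0 <= NJ ->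
  (forall I, In I l0 -> interval_wf I /\ inner_cond x I) -> interval_wf J -> last_cond x J ->
  ordl l0 -> (forall I, In I l0 -> ordered_pair I J) -> sqsum x (l0 ++ [J]) = NJ ^ 2 ->
  x_norming_partition x (FinF (l0 ++ [J])).
Proof.
  intros HN HNJ H0 HJw HJl Ho HoJ Hs. split; [split|].
  - simpl. split; [destruct l0; simpl; congruence|]. split.
    + apply List.Forall_forall. intros I HI. apply in_app_iff in HI. destruct HI as [HI|[<-|[]]]; auto.
      apply H0; auto.
    + apply ordl_nth. apply ordl_app1; auto.
  - simpl. rewrite HN, Hs. f_equal. apply sqrt_pow2; auto.
  - simpl. rewrite length_app. simpl. split.
    + intros i Hi. rewrite app_nth1 by lia. apply H0. apply nth_In. lia.
    + replace (length l0 + 1 - 1)%nat with (length l0) by lia. rewrite app_nth2 by lia.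
      rewrite Nat.sub_diag. simpl. auto.
Qed.

Lemma hull_wf_inner x A m I : HullSpec x A m I -> interval_wf I /\ inner_cond x I.
Proof.
  intros [a [b [-> [H1 [H2 [H3 [H4 _]]]]]]]. unfold interval_wf, inner_cond; simpl. split; [lia|auto].
Qed.
Lemma caseB x A NJ t : normJ x = Finite NJ -> 0 <= NJ ->
  (forall m, (t <= m)%nat -> ~ Wp x A m) ->
  (forall n, x n <> 0 -> exists m, (m < t)%nat /\ Wp x A m /\ (block_start A m <= n <= m)%nat) ->
  (exists n, x n <> 0) -> PS (termA x A) t = NJ ^ 2 ->
  exists F, x_norming_partition x F.
Proof.
  intros HN HNJ Hbeyond Hcov [n0 Hn0] Hsum.
  destruct (Hcov n0 Hn0) as [m0 [Hm0 [HW0 _]]].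
  destruct (greatest_ex (Wp x A) m0 (t - 1) HW0 ltac:(lia)) as [ms [Hms [HWs Hmax]]].
  assert (Ewl : wl x A t = wl x A ms ++ [hullf x A ms]).
  { replace t with (S ms + (t - S ms))%nat by lia. rewrite wl_stable.
    - simpl. unfold Wb. destruct (excluded_middle_informative _); [auto|contradiction].
    - intros m Hm. apply Hmax. lia. }
  pose proof (hullf_spec x A ms HWs) as HS.
  destruct HS as [a [b [EJ [Hab [Hbm [Ha [Hb [Z1 Z2]]]]]]]].
  exists (FinF (wl x A ms ++ [hullf x A ms])).
  apply finF_ok with (NJ := NJ); [exact HN|exact HNJ| | | | | | ].
  - intros I HI. destruct (wl_in x A ms I HI) as [m [_ [_ Hs]]]. eapply hull_wf_inner; eauto.
  - rewrite EJ. unfold interval_wf; simpl. lia.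
  - rewrite EJ. unfold last_cond; simpl. split; auto. split; auto.
    intros n Hn. destruct (Hcov n Hn) as [m' [Hm' [HW' Hbl]]].
    destruct (Compare_dec.lt_eq_lt_dec m' ms) as [[Hl|He]|Hl].
    + destruct HW' as [HA' _]. pose proof (bs_ge A m' ms HA' Hl). lia.
    + subst m'. destruct (Nat.le_gt_cases n b); auto. exfalso. apply Hn. apply Z2. lia.
    + exfalso. apply (Hmax m'); auto. lia.
  - apply wl_ordl.
  - intros I HI. destruct (wl_in x A ms I HI) as [m [Hm [[HAm _] Hs]]].
    destruct Hs as [a' [b' [-> [_ [Hb'm _]]]]]. rewrite EJ. unfold ordered_pair; simpl.
    pose proof (bs_ge A m ms HAm Hm). lia.
  - rewrite <- Ewl, wl_sqsum. auto.
Qed.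

Lemma lim_const_eventually (u : nat -> R) (L c : R) N : is_lim_seq u L ->
  (forall n, (N <= n)%nat -> u n = c) -> L = c.
Proof.
  intros HL Hc. assert (H2 : is_lim_seq u c).
  { apply is_lim_seq_ext_loc with (u := fun _ => c); [|apply is_lim_seq_const].
    exists N. intros n Hn. symmetry. apply Hc; auto. }
  apply is_lim_seq_unique in HL. apply is_lim_seq_unique in H2. rewrite HL in H2. injection H2. auto.
Qed.

Lemma caseA x A NJ (L : R) t0 : normJ x = Finite NJ -> 0 <= NJ -> is_lim_seq (PS x) L ->
  (forall n, (t0 <= n)%nat -> A n = false) ->
  (exists n, (block_start A t0 <= n)%nat /\ x n <> 0) ->
  PS (termA x A) t0 + (L - PS x (block_start A t0)) ^ 2 = NJ ^ 2 ->
  exists F, x_norming_partition x F.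
Proof.
  intros HN HNJ HL Ht0 [n0 [Hn0 Hx0]] Hsum. set (c := block_start A t0) in *.
  destruct (least_ex (fun n => (c <= n)%nat /\ x n <> 0) n0) as [a0 [[Ha0c Ha0] Hamin]]; [auto|].
  assert (Hz : forall n, (c <= n < a0)%nat -> x n = 0).
  { intros n Hn. apply NNPP. intro Hx. apply (Hamin n); [lia|]. split; [lia|auto]. }
  assert (HPa0 : PS x a0 = PS x c) by (apply PS_zero_range'; auto).
  assert (Hl0 : forall I, In I (wl x A t0) -> interval_wf I /\ inner_cond x I).
  { intros I HI. destruct (wl_in x A t0 I HI) as [m [_ [_ Hs]]]. eapply hull_wf_inner; eauto. }
  assert (Hord : forall J, fst J = a0 -> forall I, In I (wl x A t0) -> ordered_pair I J).
  { intros J HJ I HI. destruct (wl_in x A t0 I HI) as [m [Hm [[HAm _] Hs]]].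
    destruct Hs as [a' [b' [-> [_ [Hb'm _]]]]]. unfold ordered_pair; simpl.
    pose proof (bs_ge A m t0 HAm Hm). fold c in H. lia. }
  destruct (classic (forall N, exists n, (N <= n)%nat /\ x n <> 0)) as [Hinf|Hfin].
  - exists (FinF (wl x A t0 ++ [(a0, None)])).
    apply finF_ok with (NJ := NJ); [exact HN|exact HNJ|exact Hl0| | | | | ].
    + exact I.
    + unfold last_cond; simpl. auto.
    + apply wl_ordl.
    + apply Hord; auto.
    + rewrite sqsum_app, wl_sqsum. simpl. rewrite (isum_inf x L) by auto. rewrite HPa0. lra.
  - apply not_all_ex_not in Hfin. destruct Hfin as [N HN'].
    assert (HzN : forall n, (N <= n)%nat -> x n = 0).
    { intros n Hn. apply NNPP. intro Hx. apply HN'. eauto. }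
    assert (Ha0N : (a0 <= N)%nat).
    { destruct (Nat.le_gt_cases a0 N); auto. exfalso. apply Ha0. apply HzN. lia. }
    destruct (greatest_ex (fun n => x n <> 0) a0 N Ha0 Ha0N) as [b0 [Hb0N [Hb0 Hbmax]]].
    assert (Hzb : forall n, (b0 < n)%nat -> x n = 0).
    { intros n Hn. destruct (Nat.le_gt_cases n N).
      - apply NNPP. intro Hx. apply (Hbmax n); [lia|exact Hx].
      - apply HzN. lia. }
    assert (Hab : (a0 <= b0)%nat).
    { destruct (Nat.le_gt_cases a0 b0); auto. exfalso. apply Ha0. apply Hzb. auto. }
    assert (EL : L = PS x (S b0)).
    { apply (lim_const_eventually _ _ _ (S b0) HL). intros n Hn.
      apply PS_zero_range'; auto. intros k Hk. apply Hzb. lia. }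
    exists (FinF (wl x A t0 ++ [(a0, Some b0)])).
    apply finF_ok with (NJ := NJ); [exact HN|exact HNJ|exact Hl0| | | | | ].
    + unfold interval_wf; simpl. auto.
    + unfold last_cond; simpl. split; auto. split; auto.
      intros n Hn. destruct (Nat.le_gt_cases n b0); auto. exfalso. apply Hn. apply Hzb. auto.
    + apply wl_ordl.
    + apply Hord; auto.
    + rewrite sqsum_app, wl_sqsum. simpl. unfold isum; simpl. rewrite sum_n_m_PS by auto.
      rewrite HPa0, <- EL. lra.
Qed.
Definition nextW (x : nat -> R) (A : nat -> bool) (t : nat) : nat :=
  epsilon (inhabits 0%nat) (fun m => (t <= m)%nat /\ Wp x A m /\ forall j, (t <= j < m)%nat -> ~ Wp x A j).

Lemma nextW_spec x A t : (exists m, (t <= m)%nat /\ Wp x A m) ->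
  (t <= nextW x A t)%nat /\ Wp x A (nextW x A t) /\ forall j, (t <= j < nextW x A t)%nat -> ~ Wp x A j.
Proof.
  intros [m0 Hm0]. unfold nextW. apply epsilon_spec.
  destruct (least_ex (fun m => (t <= m)%nat /\ Wp x A m) m0 Hm0) as [k [[Hk1 Hk2] Hmin]].
  exists k. split; auto. split; auto. intros j Hj HW. apply (Hmin j); [lia|]. split; [lia|auto].
Qed.

Fixpoint eW (x : nat -> R) (A : nat -> bool) (i : nat) : nat :=
  match i with O => nextW x A 0 | S i' => nextW x A (S (eW x A i')) end.

Lemma caseInf x A NJ : normJ x = Finite NJ -> 0 <= NJ ->
  (forall t, exists m, (t <= m)%nat /\ Wp x A m) ->
  is_lim_seq (PS (termA x A)) (NJ ^ 2) ->
  exists F, x_norming_partition x F.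
Proof.
  intros HN HNJ Hinf Hlim.
  set (e := eW x A).
  assert (He0 : (0 <= e 0%nat)%nat /\ Wp x A (e 0%nat) /\ forall j, (0 <= j < e 0%nat)%nat -> ~ Wp x A j)
    by (apply nextW_spec; auto).
  assert (HeS : forall i, (S (e i) <= e (S i))%nat /\ Wp x A (e (S i)) /\
            forall j, (S (e i) <= j < e (S i))%nat -> ~ Wp x A j)
    by (intros i; apply nextW_spec; auto).
  assert (HW : forall i, Wp x A (e i)) by (intros [|i]; [apply He0|apply HeS]).
  assert (Hei : forall i, (i <= e i)%nat).
  { induction i; [lia|]. pose proof (proj1 (HeS i)). lia. }
  set (f := fun i => hullf x A (e i)).
  assert (Hf : forall i, HullSpec x A (e i) (f i)) by (intros i; apply hullf_spec; auto).
  assert (Hg : forall i, isum x (f i) ^ 2 = termA x A (e i)).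
  { intros i. rewrite (hull_isum x A (e i) (f i) (Hf i)). unfold termA. destruct (HW i) as [HA _].
    rewrite HA. reflexivity. }
  assert (Hps : forall i, PS (termA x A) (S (e i)) = PS (fun i => isum x (f i) ^ 2) (S i)).
  { induction i.
    - change (PS (termA x A) (e 0%nat) + termA x A (e 0%nat) = 0 + isum x (f 0%nat) ^ 2).
      rewrite Hg. rewrite (PS_zero_range' _ 0%nat (e 0%nat)); [simpl; lra|lia|].
      intros n Hn. apply termA_notW. apply He0. lia.
    - change (PS (termA x A) (e (S i)) + termA x A (e (S i)) =
              PS (fun i => isum x (f i) ^ 2) (S i) + isum x (f (S i)) ^ 2).
      rewrite Hg, <- IHi. rewrite (PS_zero_range' _ (S (e i)) (e (S i))); [lra|apply HeS|].
      intros n Hn. apply termA_notW. apply (proj2 (proj2 (HeS i))). lia. }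
  exists (InfF f). split; [split|].
  - simpl. split.
    + intros i. destruct (Hf i) as [a [b [E [H1 _]]]]. rewrite E. unfold interval_wf; simpl. lia.
    + intros i. destruct (Hf i) as [a [b [E [H1 [H2 _]]]]]. destruct (Hf (S i)) as [a' [b' [E' [H1' _]]]].
      rewrite E, E'. unfold ordered_pair; simpl. destruct (HW i) as [HA _].
      pose proof (bs_ge A (e i) (e (S i)) HA ltac:(pose proof (proj1 (HeS i)); lia)). lia.
  - unfold family_norm. rewrite HN. f_equal.
    assert (Hser : is_lim_seq (sum_n (fun i => isum x (f i) ^ 2)) (NJ ^ 2)).
    { apply is_lim_seq_ext with (u := fun i => PS (termA x A) (S (e i))).
      - intros i. rewrite Hps, PS_sum_n. reflexivity.
      - apply (is_lim_seq_subseq (PS (termA x A)) (NJ ^ 2) (fun i => S (e i))); auto.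
        intros P [N HP]. exists N. intros n Hn. apply HP. pose proof (Hei n). lia. }
    unfold Series. rewrite (is_lim_seq_unique _ _ Hser). apply sqrt_pow2; auto.
  - simpl. intros i. destruct (Hf i) as [a [b [E [_ [_ [Ha [Hb _]]]]]]]. rewrite E.
    unfold inner_cond; simpl. auto.
Qed.
Lemma lim_termA x (L : R) NJ A : (forall j, fv x L 0 (cutsl A j) <= NJ ^ 2) ->
  is_lim_seq (PS (termA x A)) (Series (termA x A)).
Proof.
  intros Hup.
  assert (Hex : ex_finite_lim_seq (PS (termA x A))).
  { apply ex_finite_lim_seq_incr with (M := NJ ^ 2).
    - intros n. simpl. pose proof (termA_ge0 x A n). lra.
    - intros n. specialize (Hup n). rewrite fv_cutsl in Hup.
      pose proof (pow2_ge_0 (L - PS x (block_start A n))). lra. }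
  destruct Hex as [Sg HSg].
  assert (ES : Series (termA x A) = Sg).
  { unfold Series. rewrite (Lim_seq_ext _ (fun n => PS (termA x A) (S n))) by (intros; apply PS_sum_n).
    rewrite Lim_seq_incr_1, (is_lim_seq_unique _ _ HSg). reflexivity. }
  rewrite ES. exact HSg.
Qed.

Theorem corollary3p3 (x : nat -> R) :
  inJ x -> (exists n, x n <> 0) ->
  (exists A : nat -> bool, Finite (normA x A) = normJ x) /\
  (exists F : ifamily, x_norming_partition x F).
Proof.
  intros HJ Hnz.
  destruct (NJ_props x HJ) as [NJ [HN [HNJ [Hb Happ]]]].
  assert (Hg : forall a cs, incr a cs -> gv x a cs <= NJ ^ 2) by (intros; eapply gv_bound; eauto).
  destruct (conv x NJ Hg) as [L HL].
  assert (Happ' : forall N, exists cs, incr 0 cs /\ NJ ^ 2 - / (INR N + 1) <= fv x L 0 cs).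
  { intro N. destruct (Happ (/ (INR N + 1))) as [l [H1 [H2 [H3 H4]]]].
    { apply Rinv_0_lt_compat. pose proof (pos_INR N). lra. }
    destruct (convert x L l HL H1 H2 H3) as [cs [Hc1 Hc2]]. exists cs. split; auto. lra. }
  destruct (main_lower x L NJ HL HNJ Hg Happ') as [A Hlo].
  assert (Hup : forall j, fv x L 0 (cutsl A j) <= NJ ^ 2).
  { intros j. apply fv_bound; auto. apply cutsl_incr. }
  pose proof (Phi_eq x L NJ A HL HNJ Hup Hlo) as Hphi.
  split.
  { exists A. unfold normA. rewrite Hphi, HN. f_equal. apply sqrt_pow2; auto. }
  change (Series (termA x A) + tail_term x A = NJ ^ 2) in Hphi.
  unfold tail_term in Hphi.
  destruct (excluded_middle_informative (finite_set A)) as [Hf|Hf].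
  - cbv zeta in Hphi.
    set (t0 := proj1_sig (constructive_indefinite_description _ Hf)) in Hphi.
    assert (Ht0 : forall n, (t0 <= n)%nat -> A n = false)
      by exact (proj2_sig (constructive_indefinite_description _ Hf)).
    rewrite (Series_shift x L) in Hphi by auto.
    rewrite (Series_ev_zero _ t0) in Hphi.
    2: { intros n Hn. unfold termA. rewrite Ht0; auto. }
    destruct (classic (exists n, (block_start A t0 <= n)%nat /\ x n <> 0)) as [Ha|Hna].
    + eapply caseA; eauto.
    + apply (caseB x A NJ t0); auto.
      * intros m Hm [HA _]. rewrite Ht0 in HA; [discriminate|exact Hm].
      * intros n Hn. destruct (locate A n) as [[m [Hnm [HAm Hbs]]]|Htail].
        -- exists m. split.
           ++ destruct (Nat.lt_ge_cases m t0) as [Hlt|Hge]; [exact Hlt|]. rewrite Ht0 in HAm; [discriminate|exact Hge].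
           ++ split; [split; auto; exists n; split; [lia|auto]|lia].
        -- exfalso. apply Hna. exists n. split; auto.
           destruct (Nat.le_gt_cases n t0).
           ++ replace t0 with (n + (t0 - n))%nat by lia. apply bs_le. intros; apply Htail; lia.
           ++ pose proof (bs_le_m A t0). lia.
      * assert (EL : L = PS x (block_start A t0)).
        { apply (lim_const_eventually _ _ _ (block_start A t0) HL). intros n Hn.
          apply PS_zero_range'; auto. intros k Hk. apply NNPP. intro Hx. apply Hna. exists k. split; [lia|auto]. }
        rewrite EL in Hphi. replace (PS x (block_start A t0) - PS x (block_start A t0)) with 0 in Hphi by ring.
        lra.
  - rewrite Rplus_0_r in Hphi.
    destruct (classic (forall t, exists m, (t <= m)%nat /\ Wp x A m)) as [Hinf|Hfin].
    + apply (caseInf x A NJ); auto. rewrite <- Hphi. eapply lim_termA; eauto.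
    + apply not_all_ex_not in Hfin. destruct Hfin as [t Ht].
      assert (Hbey : forall m, (t <= m)%nat -> ~ Wp x A m).
      { intros m Hm HW. apply Ht. eauto. }
      apply (caseB x A NJ t); auto.
      * intros n Hn. destruct (locate A n) as [[m [Hnm [HAm Hbs]]]|Htail].
        -- assert (HW : Wp x A m) by (split; auto; exists n; split; [lia|auto]).
           exists m. split.
           ++ destruct (Nat.lt_ge_cases m t); auto. exfalso. apply (Hbey m); auto.
           ++ split; [exact HW|lia].
        -- exfalso. apply Hf. exists n. auto.
      * rewrite <- Hphi. symmetry. apply Series_ev_zero. intros n Hn. apply termA_notW. auto.
Qed.
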